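(* Let $(\mathscr{A},\mathscr{E})$ and $(\mathscr{B},\mathscr{F})$ be exact categories and let $L : \mathscr{A} \rightarrow \mathscr{B}$ be an exact functor. Define $\mathscr{E}_L^0 = \{ s \in \mathscr{E} : Ls \text{ is a split exact sequence in } \mathscr{B} \}$. Then $(\mathscr{A},\mathscr{E}_L^0)$ is an exact category.
   Context: An exact category $(\mathscr{A},\mathscr{E})$ is an additive category $\mathscr{A}$ together with a class $\mathscr{E}$ of kernel–cokernel pairs $X \rightarrowtail Y \twoheadrightarrow Z$ (conflations), closed under isomorphism, satisfying Quillen's axioms. An exact functor is an additive functor sending conflations to conflations. A sequence is split exact if it is isomorphic to $X \to X\oplus Z \to Z$ with the canonical inclusion and projection. *)

(* Defs.v *)
From HB Require Import structures.
From mathcomp Require Import all_boot all_algebra.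
Set Implicit Arguments. Unset Strict Implicit. Unset Printing Implicit Defensive.
Import GRing.Theory.
Local Open Scope ring_scope.

Record PreAddCat := {
  Ob :> Type;
  Hom : Ob -> Ob -> zmodType;
  idm : forall A : Ob, Hom A A;
  comp : forall A B C : Ob, Hom B C -> Hom A B -> Hom A C;
  compA : forall A B C D (h : Hom C D) (g : Hom B C) (f : Hom A B),
      comp h (comp g f) = comp (comp h g) f;
  comp_id_l : forall A B (f : Hom A B), comp (idm B) f = f;
  comp_id_r : forall A B (f : Hom A B), comp f (idm A) = f;
  comp_addl : forall A B C (g1 g2 : Hom B C) (f : Hom A B),
      comp (g1 + g2) f = comp g1 f + comp g2 f;
  comp_addr : forall A B C (g : Hom B C) (f1 f2 : Hom A B),
      comp g (f1 + f2) = comp g f1 + comp g f2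
}.

Arguments idm {_} _.
Arguments comp {_ _ _ _} _ _.

Section Defs.
Variable C : PreAddCat.
Local Notation "g ∘ f" := (@comp C _ _ _ g f) (at level 40, left associativity).

Definition zero_object (Z : C) : Prop := idm Z = 0.

Definition is_iso (A B : C) (f : Hom A B) : Prop :=
  exists g : Hom B A, g ∘ f = idm A /\ f ∘ g = idm B.

Definition is_biproduct (X Z P : C) (i1 : Hom X P) (i2 : Hom Z P)
    (p1 : Hom P X) (p2 : Hom P Z) : Prop :=
  [/\ p1 ∘ i1 = idm X, p2 ∘ i2 = idm Z, p1 ∘ i2 = 0, p2 ∘ i1 = 0
    & i1 ∘ p1 + i2 ∘ p2 = idm P].

Definition additive : Prop :=
  (exists Z : C, zero_object Z) /\
  forall X Z : C, exists (P : C) (i1 : Hom X P) (i2 : Hom Z P)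
      (p1 : Hom P X) (p2 : Hom P Z), is_biproduct i1 i2 p1 p2.

Definition is_kernel (K A B : C) (k : Hom K A) (f : Hom A B) : Prop :=
  f ∘ k = 0 /\
  forall (T : C) (g : Hom T A), f ∘ g = 0 -> exists! h : Hom T K, k ∘ h = g.

Definition is_cokernel (A B Q : C) (f : Hom A B) (q : Hom B Q) : Prop :=
  q ∘ f = 0 /\
  forall (T : C) (g : Hom B T), g ∘ f = 0 -> exists! h : Hom Q T, h ∘ q = g.

Definition kernel_cokernel_pair (X Y Z : C) (i : Hom X Y) (d : Hom Y Z) : Prop :=
  is_kernel i d /\ is_cokernel i d.

Definition seq_class := forall X Y Z : C, Hom X Y -> Hom Y Z -> Prop.

Definition adm_mono (E : seq_class) (X Y : C) (i : Hom X Y) : Prop :=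
  exists (Z : C) (d : Hom Y Z), E X Y Z i d.
Definition adm_epi (E : seq_class) (Y Z : C) (d : Hom Y Z) : Prop :=
  exists (X : C) (i : Hom X Y), E X Y Z i d.

Definition is_pushout (A B A' B' : C) (i : Hom A B) (f : Hom A A')
    (i' : Hom A' B') (f' : Hom B B') : Prop :=
  f' ∘ i = i' ∘ f /\
  forall (T : C) (u : Hom B T) (v : Hom A' T), u ∘ i = v ∘ f ->
    exists! w : Hom B' T, w ∘ f' = u /\ w ∘ i' = v.

Definition is_pullback (B' A' B A : C) (d' : Hom B' A') (f' : Hom B' B)
    (d : Hom B A) (f : Hom A' A) : Prop :=
  d ∘ f' = f ∘ d' /\
  forall (T : C) (u : Hom T B) (v : Hom T A'), d ∘ u = f ∘ v ->
    exists! w : Hom T B', f' ∘ w = u /\ d' ∘ w = v.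

(* Exact category in the sense of Quillen, axioms as in Buehler,
   "Exact categories", Def. 2.1 *)
Definition is_exact_structure (E : seq_class) : Prop :=
  additive /\
  [/\
      (forall X Y Z (i : Hom X Y) (d : Hom Y Z), E X Y Z i d ->
          kernel_cokernel_pair i d),
      (forall X Y Z X' Y' Z' (i : Hom X Y) (d : Hom Y Z)
              (i' : Hom X' Y') (d' : Hom Y' Z')
              (a : Hom X X') (b : Hom Y Y') (c : Hom Z Z'),
          is_iso a -> is_iso b -> is_iso c ->
          b ∘ i = i' ∘ a -> c ∘ d = d' ∘ b ->
          E X Y Z i d -> E X' Y' Z' i' d'),
      ((forall A : C, adm_mono E (idm A)) /\ (forall A : C, adm_epi E (idm A))),
      ((forall A B D (f : Hom A B) (g : Hom B D),
          adm_mono E f -> adm_mono E g -> adm_mono E (g ∘ f)) /\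
      (forall A B D (f : Hom A B) (g : Hom B D),
          adm_epi E f -> adm_epi E g -> adm_epi E (g ∘ f)))
    &
      ((forall A B A' (i : Hom A B) (f : Hom A A'), adm_mono E i ->
          exists (B' : C) (i' : Hom A' B') (f' : Hom B B'),
            is_pushout i f i' f' /\ adm_mono E i') /\
      (forall B A A' (d : Hom B A) (f : Hom A' A), adm_epi E d ->
          exists (B' : C) (d' : Hom B' A') (f' : Hom B' B),
            is_pullback d' f' d f /\ adm_epi E d'))].

(* X --i--> Y --d--> Z is isomorphic to X --> X (+) Z --> Z
   (canonical inclusion / projection of a biproduct) *)
Definition split_exact (X Y Z : C) (i : Hom X Y) (d : Hom Y Z) : Prop :=
  exists (P : C) (i1 : Hom X P) (i2 : Hom Z P) (p1 : Hom P X) (p2 : Hom P Z)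
         (a : Hom X X) (b : Hom Y P) (c : Hom Z Z),
    is_biproduct i1 i2 p1 p2 /\ [/\ is_iso a, is_iso b, is_iso c,
        b ∘ i = i1 ∘ a & c ∘ d = p2 ∘ b].

End Defs.

Arguments seq_class : clear implicits.

Record AddFunctor (A B : PreAddCat) := {
  Fob :> A -> B;
  Fmap : forall X Y : A, Hom X Y -> Hom (Fob X) (Fob Y);
  Fmap_id : forall X : A, Fmap (idm X) = idm (Fob X);
  Fmap_comp : forall X Y Z (g : Hom Y Z) (f : Hom X Y),
      Fmap (comp g f) = comp (Fmap g) (Fmap f);
  Fmap_add : forall X Y (f g : Hom X Y), Fmap (f + g) = Fmap f + Fmap g
}.
Arguments Fmap {_ _} _ {_ _} _.

Definition exact_functor (A B : PreAddCat) (E : seq_class A) (F : seq_class B)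
    (L : AddFunctor A B) : Prop :=
  forall X Y Z (i : Hom X Y) (d : Hom Y Z),
    E X Y Z i d -> F (L X) (L Y) (L Z) (Fmap L i) (Fmap L d).

Definition E_L0 (A B : PreAddCat) (E : seq_class A) (L : AddFunctor A B)
    : seq_class A :=
  fun X Y Z i d => E X Y Z i d /\ split_exact (Fmap L i) (Fmap L d).

(* Main.v *)
Require Import Defs.
From mathcomp Require Import all_boot all_algebra.
Set Implicit Arguments. Unset Strict Implicit. Unset Printing Implicit Defensive.
Import GRing.Theory.
Local Open Scope ring_scope.

Section Aux.
Variable C : PreAddCat.
Local Notation "g ◦ f" := (@Defs.comp C _ _ _ g f) (at level 40, left associativity).

Lemma comp0r (X Y Z : C) (g : Defs.Hom Y Z) : g ◦ (0 : Defs.Hom X Y) = 0.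
Proof. apply: (@addrI _ (g ◦ 0)); by rewrite -Defs.comp_addr !addr0. Qed.
Lemma comp0l (X Y Z : C) (f : Defs.Hom X Y) : (0 : Defs.Hom Y Z) ◦ f = 0.
Proof. apply: (@addrI _ (0 ◦ f)); by rewrite -Defs.comp_addl !addr0. Qed.
Lemma compNl (X Y Z : C) (g : Defs.Hom Y Z) (f : Defs.Hom X Y) : (- g) ◦ f = - (g ◦ f).
Proof. apply/eqP; rewrite -addr_eq0 -Defs.comp_addl addNr; exact/eqP/comp0l. Qed.
Lemma compNr (X Y Z : C) (g : Defs.Hom Y Z) (f : Defs.Hom X Y) : g ◦ (- f) = - (g ◦ f).
Proof. apply/eqP; rewrite -addr_eq0 -Defs.comp_addr addNr; exact/eqP/comp0r. Qed.
Lemma compBl (X Y Z : C) (g1 g2 : Defs.Hom Y Z) (f : Defs.Hom X Y) :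
  (g1 - g2) ◦ f = g1 ◦ f - g2 ◦ f.
Proof. by rewrite Defs.comp_addl compNl. Qed.
Lemma compBr (X Y Z : C) (g : Defs.Hom Y Z) (f1 f2 : Defs.Hom X Y) :
  g ◦ (f1 - f2) = g ◦ f1 - g ◦ f2.
Proof. by rewrite Defs.comp_addr compNr. Qed.

Lemma coker_epi (X Y Q T : C) (f : Defs.Hom X Y) (q : Defs.Hom Y Q) (h1 h2 : Defs.Hom Q T) :
  is_cokernel f q -> h1 ◦ q = h2 ◦ q -> h1 = h2.
Proof.
move=> [Hq U] E.
have H0 : (h1 ◦ q) ◦ f = 0 by rewrite -Defs.compA Hq comp0r.
have [h [_ Uh]] := U _ _ H0.
by rewrite -(Uh h1 erefl) -(Uh h2 (esym E)).
Qed.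

Lemma ker_mono (K Y Z T : C) (k : Defs.Hom K Y) (f : Defs.Hom Y Z) (h1 h2 : Defs.Hom T K) :
  is_kernel k f -> k ◦ h1 = k ◦ h2 -> h1 = h2.
Proof.
move=> [Hk U] E.
have H0 : f ◦ (k ◦ h1) = 0 by rewrite Defs.compA Hk comp0l.
have [h [_ Uh]] := U _ _ H0.
by rewrite -(Uh h1 erefl) -(Uh h2 (esym E)).
Qed.

Lemma iso_id (X : C) : is_iso (idm X).
Proof. exists (idm X); by rewrite Defs.comp_id_l. Qed.

Lemma split_of (X Y Z : C) (i : Defs.Hom X Y) (d : Defs.Hom Y Z) (r : Defs.Hom Y X) (s : Defs.Hom Z Y) :
  d ◦ i = 0 -> r ◦ i = idm X -> d ◦ s = idm Z -> r ◦ s = 0 ->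
  i ◦ r + s ◦ d = idm Y -> split_exact i d.
Proof.
move=> H1 H2 H3 H4 H5.
exists Y; exists i; exists s; exists r; exists d; exists (idm X); exists (idm Y); exists (idm Z).
split; first by split.
split; try exact: iso_id; by rewrite Defs.comp_id_l Defs.comp_id_r.
Qed.

Lemma retr_split (X Y Z : C) (i : Defs.Hom X Y) (d : Defs.Hom Y Z) (r : Defs.Hom Y X) :
  kernel_cokernel_pair i d -> r ◦ i = idm X -> split_exact i d.
Proof.
move=> [[Hdi _] [_ Uc]] Hr.
have H0 : (idm Y - i ◦ r) ◦ i = 0.
  by rewrite compBl Defs.comp_id_l -Defs.compA Hr Defs.comp_id_r subrr.
have [s [Hs _]] := Uc _ _ H0.
have Hc : is_cokernel i d by split.
have Hds : d ◦ s = idm Z.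
  apply: (coker_epi Hc); rewrite -Defs.compA Hs compBr Defs.comp_id_r Defs.compA Hdi comp0l.
  by rewrite subr0 Defs.comp_id_l.
have Hrs : r ◦ s = 0.
  apply: (coker_epi Hc); rewrite -Defs.compA Hs compBr Defs.comp_id_r Defs.compA Hr Defs.comp_id_l.
  by rewrite subrr comp0l.
apply: (split_of Hdi Hr Hds Hrs).
by rewrite Hs addrC subrK.
Qed.

Lemma sect_split (X Y Z : C) (i : Defs.Hom X Y) (d : Defs.Hom Y Z) (s : Defs.Hom Z Y) :
  kernel_cokernel_pair i d -> d ◦ s = idm Z -> split_exact i d.
Proof.
move=> [[Hdi Uk] _] Hs.
have H0 : d ◦ (idm Y - s ◦ d) = 0.
  by rewrite compBr Defs.comp_id_r Defs.compA Hs Defs.comp_id_l subrr.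
have [r [Hr _]] := Uk _ _ H0.
have Hk : is_kernel i d by split.
have Hri : r ◦ i = idm X.
  apply: (ker_mono Hk); rewrite Defs.compA Hr compBl Defs.comp_id_l -Defs.compA Hdi comp0r.
  by rewrite subr0 Defs.comp_id_r.
have Hrs : r ◦ s = 0.
  apply: (ker_mono Hk); rewrite Defs.compA Hr compBl Defs.comp_id_l -Defs.compA Hs Defs.comp_id_r.
  by rewrite subrr comp0r.
apply: (split_of Hdi Hri Hs Hrs).
by rewrite Hr subrK.
Qed.

Lemma split_retr (X Y Z : C) (i : Defs.Hom X Y) (d : Defs.Hom Y Z) :
  split_exact i d -> exists r : Defs.Hom Y X, r ◦ i = idm X.
Proof.
move=> [P [i1 [i2 [p1 [p2 [a [b [c [[H1 _ _ _ _] [[ai [Ha _]] _ _ Hb _]]]]]]]]]].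
exists (ai ◦ p1 ◦ b).
by rewrite -Defs.compA Hb -!Defs.compA [p1 ◦ _]Defs.compA H1 Defs.comp_id_l.
Qed.

Lemma split_sect (X Y Z : C) (i : Defs.Hom X Y) (d : Defs.Hom Y Z) :
  split_exact i d -> exists s : Defs.Hom Z Y, d ◦ s = idm Z.
Proof.
move=> [P [i1 [i2 [p1 [p2 [a [b [c [[_ H2 _ _ _] [_ [bi [_ Hb]] [ci [Hc _]] _ Hd]]]]]]]]]].
exists (bi ◦ i2 ◦ c).
have E : d ◦ bi = ci ◦ p2.
  by rewrite -[d]Defs.comp_id_l -Hc -(Defs.compA ci c d) Hd -Defs.compA -(Defs.compA p2 b bi) Hb Defs.comp_id_r.
by rewrite !Defs.compA E -(Defs.compA ci) H2 Defs.comp_id_r.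
Qed.

End Aux.

Local Notation "g ◦ f" := (Defs.comp g f) (at level 40, left associativity).

Theorem mainTheorem2 (A B : PreAddCat) (E : seq_class A) (F : seq_class B)
    (L : AddFunctor A B) :
  is_exact_structure E -> is_exact_structure F -> exact_functor E F L ->
  is_exact_structure (E_L0 E L).
Proof.
move=> [Hadd [Hkcp Hiso [E0m E0e] [E1m E1e] [E2m E2e]]]
       [_ [Fkcp _ _ _ _]] HL.
have Kc : forall X Y Z (i : Defs.Hom X Y) (d : Defs.Hom Y Z), E X Y Z i d ->
    kernel_cokernel_pair (Fmap L i) (Fmap L d).
  by move=> X Y Z i d H; apply: Fkcp; apply: HL.
split; first exact: Hadd.
split.
- by move=> X Y Z i d [H _]; apply: Hkcp.
- move=> X Y Z X' Y' Z' i d i' d' a b c Ha Hb Hc Hba Hcb [H0 Hs].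
  have H' := Hiso _ _ _ _ _ _ _ _ _ _ _ _ _ Ha Hb Hc Hba Hcb H0.
  split; first exact: H'.
  have [r Hr] := split_retr Hs.
  have [ai [Ha1 Ha2]] := Ha.
  have [bi [Hb1 Hb2]] := Hb.
  have Hbi : bi ◦ i' = i ◦ ai.
    by rewrite -[bi ◦ i']Defs.comp_id_r -Ha2 Defs.compA -(Defs.compA bi i' a) -Hba
      Defs.compA Hb1 Defs.comp_id_l.
  apply: (retr_split (r := Fmap L a ◦ r ◦ Fmap L bi)) (Kc _ _ _ _ _ H') _.
  rewrite -Defs.compA -Fmap_comp Hbi Fmap_comp Defs.compA -(Defs.compA (Fmap L a)) Hr.
  by rewrite Defs.comp_id_r -Fmap_comp Ha2 Fmap_id.
- split.
  + move=> X; have [Z [d H]] := E0m X; exists Z, d; split => //.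
    apply: (retr_split (r := idm (L X))) (Kc _ _ _ _ _ H) _.
    by rewrite Fmap_id Defs.comp_id_l.
  + move=> X; have [Z [d H]] := E0e X; exists Z, d; split => //.
    apply: (sect_split (s := idm (L X))) (Kc _ _ _ _ _ H) _.
    by rewrite Fmap_id Defs.comp_id_l.
- split.
  + move=> X Y W f g [Zf [df [Ef Sf]]] [Zg [dg [Eg Sg]]].
    have [Z [e He]] := E1m _ _ _ f g (ex_intro _ Zf (ex_intro _ df Ef))
                              (ex_intro _ Zg (ex_intro _ dg Eg)).
    exists Z, e; split => //.
    have [rf Hrf] := split_retr Sf; have [rg Hrg] := split_retr Sg.
    apply: (retr_split (r := rf ◦ rg)) (Kc _ _ _ _ _ He) _.
    by rewrite Fmap_comp -Defs.compA (Defs.compA rg) Hrg Defs.comp_id_l.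
  + move=> X Y W f g [Xf [jf [Ef Sf]]] [Xg [jg [Eg Sg]]].
    have [Z [e He]] := E1e _ _ _ f g (ex_intro _ Xf (ex_intro _ jf Ef))
                              (ex_intro _ Xg (ex_intro _ jg Eg)).
    exists Z, e; split => //.
    have [sf Hsf] := split_sect Sf; have [sg Hsg] := split_sect Sg.
    apply: (sect_split (s := sf ◦ sg)) (Kc _ _ _ _ _ He) _.
    by rewrite Fmap_comp -Defs.compA (Defs.compA (Fmap L f)) Hsf Defs.comp_id_l.
- split.
  + move=> X Y X' i f [C0 [d [Ed Sd]]].
    have [B' [i' [f' [[Hsq Hup] [Z [d'' Ed'']]]]]] :=
      E2m _ _ _ i f (ex_intro _ C0 (ex_intro _ d Ed)).
    exists B', i', f'; split; first by split.
    exists Z, d''; split => //.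
    have [[Hdi _] [_ Uc]] := Hkcp _ _ _ _ _ Ed.
    have [[Hd''i' _] [Hc2 Uc'']] := Hkcp _ _ _ _ _ Ed''.
    have Hc'' : is_cokernel i' d'' by split.
    have [d' [[Hd'1 Hd'2] _]] : exists! d' : Defs.Hom B' C0, d' ◦ f' = d /\ d' ◦ i' = 0.
      by apply: Hup; rewrite Hdi comp0l.
    have [h [Hh _]] := Uc'' _ _ Hd'2.
    have Hk0 : (d'' ◦ f') ◦ i = 0.
      by rewrite -Defs.compA Hsq Defs.compA Hd''i' comp0l.
    have [k [Hk _]] := Uc _ _ Hk0.
    have Hkh : k ◦ h = idm Z.
      apply: (coker_epi Hc''); rewrite Defs.comp_id_l.
      have H0 : (d'' ◦ f') ◦ i = 0 ◦ f by rewrite Hk0 comp0l.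
      have [w [_ Uw]] := Hup _ _ _ H0.
      rewrite -(Uw (k ◦ h ◦ d'')); last first.
        split; first by rewrite -!Defs.compA (Defs.compA h d'' f') Hh Hd'1 Hk.
        by rewrite -!Defs.compA Hd''i' !comp0r.
      by apply: Uw; split.
    have [s Hs] := split_sect Sd.
    apply: (sect_split (s := Fmap L f' ◦ s ◦ Fmap L h)) (Kc _ _ _ _ _ Ed'') _.
    rewrite !Defs.compA -Fmap_comp -Hk Fmap_comp -(Defs.compA _ (Fmap L d)) Hs.
    by rewrite Defs.comp_id_r -Fmap_comp Hkh Fmap_id.
  + move=> Y X X' d f [C0 [i [Ei Si]]].
    have [B' [d' [f' [[Hsq Hup] [Z [i'' Ei'']]]]]] :=
      E2e _ _ _ d f (ex_intro _ C0 (ex_intro _ i Ei)).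
    exists B', d', f'; split; first by split.
    exists Z, i''; split => //.
    have [[Hdi Uk] _] := Hkcp _ _ _ _ _ Ei.
    have [[Hd'i'' Uk''] _] := Hkcp _ _ _ _ _ Ei''.
    have Hk'' : is_kernel i'' d' by split.
    have [i' [[Hi'1 Hi'2] _]] : exists! i' : Defs.Hom C0 B', f' ◦ i' = i /\ d' ◦ i' = 0.
      by apply: Hup; rewrite Hdi comp0r.
    have [h [Hh _]] := Uk'' _ _ Hi'2.
    have Hk0 : d ◦ (f' ◦ i'') = 0.
      by rewrite Defs.compA Hsq -Defs.compA Hd'i'' comp0r.
    have [k [Hk _]] := Uk _ _ Hk0.
    have Hhk : h ◦ k = idm Z.
      apply: (ker_mono Hk''); rewrite Defs.comp_id_r.
      have H0 : d ◦ (f' ◦ i'') = f ◦ 0 by rewrite Hk0 comp0r.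
      have [w [_ Uw]] := Hup _ _ _ H0.
      rewrite -(Uw (i'' ◦ (h ◦ k))); last first.
        split; first by rewrite (Defs.compA i'' h k) Hh Defs.compA Hi'1 Hk.
        by rewrite !Defs.compA Hd'i'' !comp0l.
      by apply: Uw; split.
    have [r Hr] := split_retr Si.
    apply: (retr_split (r := Fmap L h ◦ r ◦ Fmap L f')) (Kc _ _ _ _ _ Ei'') _.
    rewrite -!Defs.compA -Fmap_comp -Hk Fmap_comp (Defs.compA r) Hr.
    by rewrite Defs.comp_id_l -Fmap_comp Hhk Fmap_id.
Qed.
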